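(* Let $\lambda$ be a dominant integral weight of $\mathfrak{sl}_{r+1}$ and $b\in\mathcal B(\lambda+\rho)$. For $1\le j\le i\le r$, the entry $a_{i,j}$ of the BZL path $\psi_{\mathbf i}(b)$ is circled by rule (C-I) if and only if the corresponding entry $\mathbf a_{i-j+1,i}$ of $\mathbf a(b)$ is circled by rule (C-II).
   Context: Fix $r\ge1$ and $\mathfrak g=\mathfrak{sl}_{r+1}$ with index set $I=\{1,\dots,r\}$, simple roots $\alpha_1,\dots,\alpha_r$, fundamental weights $\omega_1,\dots,\omega_r$, $N=r(r+1)/2$, and $\rho=\sum_i\omega_i$. For a dominant integral weight $\mu=\sum_i m_i\omega_i$, $\mathcal B(\mu)$ is identified (Kashiwara–Nakashima) with the set of semistandard Young tableaux with entries in $\{1,\dots,r+1\}$ of the shape having $m_i$ columns of height $i$; an entry equal to $k$ is a $k$-box. A tableau is identified with the tensor product of its entries read column by column from right to left, each column top to bottom, and $\tilde e_i,\tilde f_i$ act by the signature rule: for each factor write $-$ if it equals $i+1$, $+$ if it equals $i$; repeatedly cancel adjacent $+-$ pairs; $\tilde e_i$ changes the factor of the rightmost remaining $-$ from $i+1$ to $i$ (giving $0$ if none), $\tilde f_i$ changes the factor of the leftmost remaining $+$ from $i$ to $i+1$ (giving $0$ if none). Fix the long word $\mathbf i=(i_1,\dots,i_N)=(1,2,1,3,2,1,\dots,r,\dots,2,1)$. The BZL path $\psi_{\mathbf i}(b)=(a_1,\dots,a_N)$: $a_k$ is maximal with $\tilde e_{i_k}^{a_k}\cdots\tilde e_{i_1}^{a_1}b\ne0$.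 Triangular form: $a_{i,j}=a_{i(i-1)/2+j}$ for $1\le j\le i\le r$. Rule (C-I): circle $a_{i,j}$ if $a_{i,j}=a_{i,j+1}$, with the convention $a_{i,i+1}=0$. For $1\le i\le j\le r$, $\mathbf a_{i,j}$ is the number of $(j+1)$-boxes in rows $1$ through $i$ of $b$, with convention $\mathbf a_{0,j}=0$; $\mathbf a(b)=(\mathbf a_{i,j})$. Rule (C-II): circle $\mathbf a_{i,j}$ if $\mathbf a_{i,j}=\mathbf a_{i-1,j}$. *)

(* Defs.v *)
From mathcomp Require Import all_boot.
Set Implicit Arguments. Unset Strict Implicit. Unset Printing Implicit Defensive.

(* A tableau is the list of its columns, from left to right; each column is
   listed from top to bottom.  Row k (1-based) of a column c is nth 0 c k.-1. *)
Definition tableau := seq (seq nat).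

(* Column heights (left to right) of the shape of lambda + rho, where
   lambda = sum_i lam i * omega_i (i = 1..r): lam i + 1 columns of height i,
   taller columns to the left. *)
Definition shape_lr (r : nat) (lam : nat -> nat) : seq nat :=
  flatten [seq nseq (lam h).+1 h | h <- rev (iota 1 r)].

(* Semistandard Young tableaux of a given column shape with entries in
   {1, ..., r+1}: the Kashiwara--Nakashima model of B(mu). *)
Definition is_SSYT (r : nat) (sh : seq nat) (T : tableau) : Prop :=
  [/\ map size T = sh,
      (forall c, c \in T -> forall x, x \in c -> 1 <= x <= r.+1),
      (forall c, c \in T -> sorted ltn c) &
      (forall p q k, p < q < size T -> k < size (nth [::] T q) ->
         nth 0 (nth [::] T p) k <= nth 0 (nth [::] T q) k)].

Definition in_B_lam_rho (r : nat) (lam : nat -> nat) (T : tableau) : Prop :=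
  is_SSYT r (shape_lr r lam) T.

Definition read_word (T : tableau) : seq nat := flatten (rev T).

(* Signature of a word for index i: for each factor equal to i (sign +,
   encoded true) or i+1 (sign -, encoded false), record the sign and the
   position of the factor. *)
Definition signature (i : nat) (w : seq nat) : seq (bool * nat) :=
  [seq (p.1 == i, p.2) | p <- zip w (iota 0 (size w)) & (p.1 == i) || (p.1 == i.+1)].

Fixpoint cancel1 (s : seq (bool * nat)) : seq (bool * nat) :=
  match s with
  | (true, _) :: (false, _) :: t => t
  | x :: t => x :: cancel1 t
  | [::] => [::]
  end.

(* Repeatedly cancel adjacent (+,-) pairs (size s iterations suffice, each
   effective iteration removes two signs). *)
Definition reduced_signature (i : nat) (w : seq nat) : seq (bool * nat) :=
  let s := signature i w in iter (size s) cancel1 s.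

(* e_i on words: change the factor of the rightmost remaining '-' from i+1
   to i; None encodes 0. *)
Definition e_word (i : nat) (w : seq nat) : option (seq nat) :=
  let minus := [seq q.2 | q <- reduced_signature i w & ~~ q.1] in
  if minus is [::] then None else Some (set_nth 0 w (last 0 minus) i).

Definition e_tab (i : nat) (T : tableau) : option tableau :=
  omap (fun w => rev (reshape (map size (rev T)) w)) (e_word i (read_word T)).

Definition e_iter (i a : nat) (T : tableau) : option tableau :=
  iter a (obind (e_tab i)) (Some T).

(* The maximal a with e_i^a T <> 0.  Each application of e_i removes one
   (i+1)-entry, so all such a are <= the number of boxes. *)
Definition eps_max (i : nat) (T : tableau) : nat :=
  \max_(a < (size (read_word T)).+1 | e_iter i a T != None) a.

Definition long_word (r : nat) : seq nat :=
  flatten [seq rev (iota 1 k) | k <- iota 1 r].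

Fixpoint bzl_aux (ii : seq nat) (T : tableau) : seq nat :=
  match ii with
  | [::] => [::]
  | i :: ii' =>
      let a := eps_max i T in
      a :: bzl_aux ii' (odflt T (e_iter i a T))
  end.

Definition bzl (r : nat) (T : tableau) : seq nat := bzl_aux (long_word r) T.

(* Triangular form: a_{i,j} = a_{i(i-1)/2 + j}, 1 <= j <= i <= r, with the
   convention a_{i,i+1} = 0. *)
Definition bzl_entry (r : nat) (T : tableau) (i j : nat) : nat :=
  if (1 <= j <= i) then nth 0 (bzl r T) ((i * i.-1) %/ 2 + j).-1 else 0.

Definition circled_CI (r : nat) (T : tableau) (i j : nat) : bool :=
  bzl_entry r T i j == bzl_entry r T i j.+1.

Definition bold_a (T : tableau) (i j : nat) : nat :=
  \sum_(c <- T) count_mem j.+1 (take i c).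

Definition circled_CII (T : tableau) (i j : nat) : bool :=
  bold_a T i j == bold_a T i.-1 j.

(* Main.v *)
Require Import Defs.
From mathcomp Require Import all_boot zify.
Set Implicit Arguments. Unset Strict Implicit. Unset Printing Implicit Defensive.

Fixpoint good (s : seq bool) : bool :=
  match s with
  | [::] => true
  | true :: false :: t => good t
  | true :: t => good t
  | false :: _ => false
  end.

Lemma goodT s : good s -> good (true :: s).
Proof. by case: s => [|[] t]. Qed.

Lemma good_cat s t : good s -> good t -> good (s ++ t).
Proof.
move: (leqnn (size s)); move: {2}(size s) => n; elim: n s => [|n IH] s.
  by case: s.
case: s => [|[] s] //= Hs.
case: s Hs => [|[] s] //= Hs.
- by move=> _ Gt; apply: goodT.
- move=> Gs Gt; have := IH (true :: s) Hs Gs Gt; by [].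
- by move=> Gs Gt; apply: IH => //; apply: ltnW.
Qed.

Definition sigb (i : nat) (w : seq nat) : seq bool :=
  [seq x == i | x <- w & (x == i) || (x == i.+1)].

Lemma sigb_cat i u v : sigb i (u ++ v) = sigb i u ++ sigb i v.
Proof. by rewrite /sigb filter_cat map_cat. Qed.

Lemma cancel1_good (s : seq (bool * nat)) : good (map fst s) ->
  good (map fst (cancel1 s)) /\ count (fun q => ~~ q.1) (cancel1 s) = (count (fun q => ~~ q.1) s).-1.
Proof.
elim: s => [|[b n] t IH] //=.
case: b => //.
case: t IH => [|[b' n'] t'] IH //=.
case: b' IH => /= IH.
  move=> G; have [G1 C1] := IH G; split; first by apply: goodT.
  by rewrite C1.
by move=> G; split.
Qed.

Lemma cancel1_F (F G : seq (bool * nat)) : all (fun q => ~~ q.1) F ->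
  cancel1 (F ++ G) = F ++ cancel1 G.
Proof.
elim: F => [|[b n] F IH] //= /andP[Hb HF].
by case: b Hb => //= _; rewrite IH.
Qed.

Lemma iter_cancel1_F n (F G : seq (bool * nat)) : all (fun q => ~~ q.1) F ->
  iter n cancel1 (F ++ G) = F ++ iter n cancel1 G.
Proof. by move=> HF; elim: n => //= n ->; rewrite cancel1_F. Qed.

Lemma iter_cancel1_good n (G : seq (bool * nat)) : good (map fst G) ->
  good (map fst (iter n cancel1 G)) /\
  count (fun q => ~~ q.1) (iter n cancel1 G) = count (fun q => ~~ q.1) G - n.
Proof.
move=> HG; elim: n => [|n [IH1 IH2]] /=; first by rewrite subn0.
have [H1 H2] := cancel1_good IH1; split => //.
by rewrite H2 IH2 subnS.
Qed.

Definition sigpos (i : nat) (w : seq nat) (s0 : nat) : seq (bool * nat) :=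
  [seq (p.1 == i, p.2) | p <- zip w (iota s0 (size w)) & (p.1 == i) || (p.1 == i.+1)].

Lemma sigpos_cons i x w s0 : sigpos i (x :: w) s0 =
  (if (x == i) || (x == i.+1) then [:: (x == i, s0)] else [::]) ++ sigpos i w s0.+1.
Proof. by rewrite /sigpos /=; case: ifP. Qed.

Lemma sigpos_cat i u v s0 : sigpos i (u ++ v) s0 = sigpos i u s0 ++ sigpos i v (s0 + size u).
Proof.
elim: u s0 => [|x u IH] s0 /=; first by rewrite addn0.
by rewrite !sigpos_cons IH addSnnS catA.
Qed.

Lemma sigpos_fst i w s0 : map fst (sigpos i w s0) = sigb i w.
Proof.
elim: w s0 => [|x w IH] s0 //=.
rewrite sigpos_cons /sigb /=; case: ifP => _ /=; by rewrite IH.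
Qed.

Lemma sigpos_noti i u s0 : i \notin u -> all (fun q => ~~ q.1) (sigpos i u s0).
Proof.
elim: u s0 => [|x u IH] s0 //=.
rewrite in_cons negb_or sigpos_cons => /andP[Hx Hu].
rewrite all_cat IH // andbT; case: ifP => //= _.
by rewrite eq_sym Hx.
Qed.

Lemma sigpos_nil i u s0 : i \notin u -> i.+1 \notin u -> sigpos i u s0 = [::].
Proof.
elim: u s0 => [|x u IH] s0 //=.
rewrite !in_cons !negb_or sigpos_cons => /andP[Hx Hu] /andP[Hx1 Hu1].
by rewrite IH // eq_sym (negbTE Hx) eq_sym (negbTE Hx1).
Qed.

Lemma set_nth_mid (u1 u2 : seq nat) x y :
  set_nth 0 (u1 ++ x :: u2) (size u1) y = u1 ++ y :: u2.
Proof. by elim: u1 => [|z u1 IH] //=; rewrite IH. Qed.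

Definition rep i (y : nat) := if y == i.+1 then i else y.

Lemma count_filter0 (T : Type) (a : pred T) s : count a s = 0 -> [seq x <- s | a x] = [::].
Proof. by move=> H; apply/nilP; rewrite /nilp size_filter H. Qed.

Lemma red_sig i u v : i \notin u -> good (sigb i v) ->
  [seq q.2 | q <- reduced_signature i (u ++ v) & ~~ q.1] = [seq q.2 | q <- sigpos i u 0].
Proof.
move=> Hu Hv.
rewrite /reduced_signature.
have -> : signature i (u ++ v) = sigpos i (u ++ v) 0 by [].
rewrite sigpos_cat iter_cancel1_F ?sigpos_noti // filter_cat map_cat.
have HG : good (map fst (sigpos i v (0 + size u))) by rewrite sigpos_fst.
have [_ C] := iter_cancel1_good (size (sigpos i u 0 ++ sigpos i v (0 + size u))) HG.
rewrite (@count_filter0 _ _ (iter _ cancel1 _)); last first.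
  rewrite C; apply/eqP; rewrite subn_eq0 size_cat.
  by apply: leq_trans (count_size _ _) (leq_addl _ _).
rewrite cats0; congr map.
by apply/all_filterP; apply: sigpos_noti.
Qed.

Lemma e_word_none i u v : i \notin u -> i.+1 \notin u -> good (sigb i v) ->
  e_word i (u ++ v) = None.
Proof.
move=> Hu Hu1 Hv; rewrite /e_word red_sig // sigpos_nil //.
Qed.

Lemma e_word_some i u1 u2 v : i \notin u1 -> i \notin u2 -> i.+1 \notin u2 -> good (sigb i v) ->
  i != i.+1 ->
  e_word i (u1 ++ i.+1 :: u2 ++ v) = Some (u1 ++ i :: u2 ++ v).
Proof.
move=> H1 H2 H21 Hv _.
have Hu : i \notin u1 ++ i.+1 :: u2.
  by rewrite mem_cat in_cons (negbTE H1) (negbTE H2) (ltn_eqF (ltnSn i)).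
rewrite -cat_cons catA /e_word red_sig //.
rewrite sigpos_cat sigpos_cons (@sigpos_nil i u2) // eqxx orbT cats0.
have -> : (i.+1 == i) = false by rewrite eq_sym (ltn_eqF (ltnSn i)).
rewrite map_cat /= last_cat /= add0n -catA /=.
by case: [seq q.2 | q <- sigpos i u1 0] => [|a l] /=; rewrite set_nth_mid.
Qed.


Lemma last_split (x : nat) u : x \in u -> exists u1 u2, u = u1 ++ x :: u2 /\ x \notin u2.
Proof.
elim/last_ind: u => [|u y IH] //.
rewrite -cats1 mem_cat inE.
case: (eqVneq y x) => [-> _|Hy].
  by exists u, [::].
rewrite orbF => /IH [u1 [u2 [-> H2]]].
exists u1, (u2 ++ [:: y]); split; first by rewrite -catA.
by rewrite mem_cat inE negb_or H2 eq_sym.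
Qed.

Lemma rw_tab T : rev (reshape (shape (rev T)) (read_word T)) = T.
Proof. by rewrite /read_word flattenK revK. Qed.

Lemma e_tab_some i T w' : e_word i (read_word T) = Some w' ->
  size w' = size (read_word T) ->
  exists T', e_tab i T = Some T' /\ read_word T' = w' /\ shape T' = shape T.
Proof.
move=> E S; rewrite /e_tab E /=.
eexists; split; first by reflexivity.
have Hs : size w' = sumn (shape (rev T)) by rewrite S /read_word size_flatten.
split.
  by rewrite /read_word revK reshapeKr // Hs.
rewrite /shape map_rev -/(shape _) reshapeKl; first by rewrite map_rev revK.
by rewrite Hs.
Qed.

Lemma e_tab_none i T : e_word i (read_word T) = None -> e_tab i T = None.
Proof. by rewrite /e_tab => ->. Qed.

Lemma e_tab_step i T u v : read_word T = u ++ v -> i \notin u -> good (sigb i v) ->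
  (i.+1 \notin u -> e_tab i T = None) /\
  (i.+1 \in u -> exists T' u' v', e_tab i T = Some T' /\ read_word T' = u' ++ v' /\
     i \notin u' /\ good (sigb i v') /\ count_mem i.+1 u' = (count_mem i.+1 u).-1 /\
     map (rep i) u' ++ v' = map (rep i) u ++ v /\ shape T' = shape T).
Proof.
move=> RW Hu Hv; split.
  by move=> Hu1; apply: e_tab_none; rewrite RW e_word_none.
move=> /last_split [u1 [u2 [Eu H2]]].
move: Hu; rewrite Eu mem_cat in_cons negb_or negb_or => /and3P[H1 Hne H22].
have E : e_word i (read_word T) = Some (u1 ++ i :: u2 ++ v).
  by rewrite RW Eu -catA cat_cons e_word_some // eq_sym.
have Hsz : size (u1 ++ i :: u2 ++ v) = size (read_word T).
  by rewrite RW Eu -catA cat_cons !size_cat.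
have [T' [E1 [E2 E3]]] := e_tab_some E Hsz.
exists T', u1, (i :: u2 ++ v); do 6?split => //.
- have -> : sigb i (i :: u2 ++ v) = true :: sigb i (u2 ++ v) by rewrite /sigb /= eqxx /= eqxx.
  rewrite sigb_cat.
  have -> : sigb i u2 = [::].
    rewrite /sigb; have -> : [seq x <- u2 | (x == i) || (x == i.+1)] = [::] => //.
    apply: count_filter0; apply/eqP; rewrite -leqn0 leqNgt -has_count.
    by apply/hasP => [[x Hx /orP[]/eqP E0]]; move: Hx; rewrite E0 ?(negbTE H22) ?(negbTE H2).
  by apply: goodT.
- rewrite count_cat /= eqxx (count_memPn H2) addn0 addnC /=.
  by [].
- have Hm : map (rep i) u2 = u2.
    rewrite -[RHS]map_id; apply/eq_in_map => y Hy; rewrite /rep.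
    by case: ifP => // /eqP E0; move: Hy; rewrite E0 (negbTE H2).
  by rewrite map_cat /= Hm /rep eqxx -catA.
Qed.

Lemma iter_none i n : iter n (obind (e_tab i)) None = None.
Proof. by elim: n => //= n ->. Qed.

Lemma e_iterS i n T : e_iter i n.+1 T = obind (fun T' => e_iter i n T') (e_tab i T).
Proof.
rewrite /e_iter iterSr /=; case: (e_tab i T) => //=; exact: iter_none.
Qed.

Lemma map_rep_id i u : i.+1 \notin u -> map (rep i) u = u.
Proof.
move=> H; rewrite -[RHS]map_id; apply/eq_in_map => y Hy; rewrite /rep.
by case: ifP => // /eqP E0; move: Hy; rewrite E0 (negbTE H).
Qed.

Lemma e_iter_main i A T u v : read_word T = u ++ v -> i \notin u -> good (sigb i v) ->
  count_mem i.+1 u = A ->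
  (forall n, n <= A -> e_iter i n T != None) /\ e_iter i A.+1 T = None /\
  exists Tf, e_iter i A T = Some Tf /\ read_word Tf = map (rep i) u ++ v /\ shape Tf = shape T.
Proof.
elim: A T u v => [|A IH] T u v RW Hu Hv HA.
  have Hn : i.+1 \notin u by apply/count_memPn.
  have [N _] := e_tab_step RW Hu Hv.
  split; first by move=> n; rewrite leqn0 => /eqP ->.
  split; first by rewrite e_iterS N.
  by exists T; rewrite map_rep_id.
have Hin : i.+1 \in u by rewrite -has_pred1 has_count HA.
have [_ S] := e_tab_step RW Hu Hv.
have [T' [u' [v' [E1 [E2 [E3 [E4 [E5 [E6 E7]]]]]]]]] := S Hin.
have E5' : count_mem i.+1 u' = A by rewrite E5 HA.
have [I1 [I2 [Tf [I3 [I4 I5]]]]] := IH T' u' v' E2 E3 E4 E5'.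
split.
  case => [|n] Hn; first by [].
  by rewrite e_iterS E1 /=; apply: I1.
split; first by rewrite e_iterS E1.
exists Tf; rewrite e_iterS E1 /= I3; split => //; split; first by rewrite I4 E6.
by rewrite I5 E7.
Qed.

Lemma e_iter_none_ge i A T : e_iter i A.+1 T = None -> forall n, A < n -> e_iter i n T = None.
Proof.
move=> H n Hn; rewrite -(subnK Hn) /e_iter iterD.
by move: H; rewrite /e_iter => ->; apply: iter_none.
Qed.

Lemma eps_max_eq i A T : (forall n, n <= A -> e_iter i n T != None) -> e_iter i A.+1 T = None ->
  A <= size (read_word T) -> eps_max i T = A.
Proof.
move=> H1 H2 HA; rewrite /eps_max; apply/eqP; rewrite eqn_leq; apply/andP; split.
  apply/bigmax_leqP => a Ha; rewrite leqNgt; apply/negP => Hlt.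
  by move: Ha; rewrite (e_iter_none_ge H2 Hlt).
have HA' : A < (size (read_word T)).+1 by [].
have := @leq_bigmax_cond _ (fun a : 'I_(size (read_word T)).+1 => e_iter i a T != None) (fun a => val a) (Ordinal HA') (H1 _ (leqnn A)).
by [].
Qed.

Lemma tab_eq T1 T2 : read_word T1 = read_word T2 -> shape T1 = shape T2 -> T1 = T2.
Proof.
move=> R S; rewrite -(rw_tab T1) -(rw_tab T2) R.
by rewrite /shape !map_rev -!/(shape _) S.
Qed.

Lemma eps_step i T u v T2 : read_word T = u ++ v -> i \notin u -> good (sigb i v) ->
  read_word T2 = map (rep i) u ++ v -> shape T2 = shape T ->
  eps_max i T = count_mem i.+1 u /\ odflt T (e_iter i (eps_max i T) T) = T2.
Proof.
move=> RW Hu Hv R2 S2.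
have [I1 [I2 [Tf [I3 [I4 I5]]]]] := e_iter_main RW Hu Hv (erefl _).
have E : eps_max i T = count_mem i.+1 u.
  apply: eps_max_eq => //; rewrite RW size_cat.
  exact: leq_trans (count_size _ _) (leq_addr _ _).
split => //; rewrite E I3 /=; apply: tab_eq; first by rewrite I4 R2.
by rewrite I5 S2.
Qed.


Definition gv (k M p x : nat) : nat :=
  if x <= k then p else if x == k.+1 then maxn p M else x.

Fixpoint gcolA (k M p : nat) (c : seq nat) : seq nat :=
  match c with
  | [::] => [::]
  | x :: c' => gv k M p x :: gcolA k M p.+1 c'
  end.

Ltac sgv := rewrite /gv /rep /=; repeat (first [case: ifP => ? | case: eqP => ?]); lia.

Lemma size_gcolA k M p c : size (gcolA k M p c) = size c.
Proof. by elim: c p => //= x c IH p; rewrite IH. Qed.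

Lemma gcolA_init p x0 c : path ltn x0 c -> p <= x0.+1 -> 1 <= p -> gcolA 1 2 p c = c.
Proof.
elim: c p x0 => //= x c IH p x0 /andP[Hx Hc] Hp H1.
rewrite (IH p.+1 x) //; last by lia.
congr cons; rewrite /gv; case: ifP => H; first by lia.
by case: ifP => // /eqP Ex; lia.
Qed.

Lemma gcolA_trans k p x0 c : path ltn x0 c -> p <= x0.+1 -> 1 <= p ->
  gcolA k 1 p c = gcolA k.+1 k.+2 p c.
Proof.
elim: c p x0 => //= x c IH p x0 /andP[Hx Hc] Hp H1.
rewrite (IH p.+1 x) //; last by lia.
congr cons; sgv.
Qed.

Lemma gcolA_hi k m p c : m <= k -> m.+2 <= p ->
  all (fun y => m.+1 < y) (gcolA k m.+1 p c) /\ gcolA k m.+1 p c = gcolA k m p c.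
Proof.
move=> Hm; elim: c p => //= x c IH p Hp.
have [A B] := IH p.+1 (leqW Hp).
rewrite A B; split; last first.
  by congr cons; sgv.
rewrite andbT; sgv.
Qed.

Lemma sigb_big m s : all (fun y => m.+1 < y) s -> sigb m s = [::].
Proof.
elim: s => //= y s IH /andP[Hy Hs]; rewrite /sigb /=.
have -> : (y == m) || (y == m.+1) = false by apply/negbTE; lia.
exact: IH.
Qed.

Definition rep' := rep.

Lemma gv_np k m p x x0 : 1 <= m <= k -> x0 < x -> p <= x0.+1 -> ((p != m) || (k < x)) ->
  ((p != m.+1) || (k < x0)) ->
  [/\ (gv k m.+1 p x == m) = false, rep m (gv k m.+1 p x) = gv k m p x &
      (gv k m.+1 p x == m.+1) = (p <= m) && (x == k.+1)].
Proof.
move=> H1 H2 H3 H4 H5.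
rewrite /gv /rep; case: (leqP x k) => Hk.
  split; try (case: ifP => ?); lia.
case: (eqVneq x k.+1) => Hk1.
  split; try (case: ifP => ?); lia.
split; try (case: ifP => ?); lia.
Qed.

Lemma gcolA_np k m p x0 c : path ltn x0 c -> p <= x0.+1 -> 1 <= m <= k ->
  (forall t, t < size c -> p + t = m -> k < nth 0 c t) -> (p = m.+1 -> k < x0) ->
  [/\ m \notin gcolA k m.+1 p c, map (rep m) (gcolA k m.+1 p c) = gcolA k m p c &
      count_mem m.+1 (gcolA k m.+1 p c) = count_mem k.+1 (take (m.+1 - p) c)].
Proof.
move=> + + Hm.
elim: c p x0 => [|x c IH] p x0 /=; first by [].
move=> /andP[Hx Hc] Hp NP P1.
have NP' : forall t, t < size c -> p.+1 + t = m -> k < nth 0 c t.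
  by move=> t Ht Et; apply: (NP t.+1) => //; lia.
have P1' : p.+1 = m.+1 -> k < x by move=> [E]; apply: (NP 0) => //; rewrite addn0.
have Hpx : p.+1 <= x.+1 by lia.
have [A B C] := IH p.+1 x Hc Hpx NP' P1'.
have HH : (p != m) || (k < x).
  by case: (eqVneq p m) => //= E; apply: (NP 0) => //; rewrite addn0.
have HH' : (p != m.+1) || (k < x0).
  by case: (eqVneq p m.+1) => //= E; apply: P1.
have [G1 G2 G3] := gv_np Hm Hx Hp HH HH'.
rewrite in_cons (negbTE A) B C orbF eq_sym G1 G2 G3.
case E: (m.+1 - p) => [|t] /=.
  have -> : m.+1 - p.+1 = 0 by lia.
  by rewrite take0 (_ : p <= m = false) //; lia.
have -> : m.+1 - p.+1 = t by lia.
by rewrite (_ : p <= m = true) //; lia.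
Qed.

Lemma sigb_cons m v s : sigb m (v :: s) =
  (if (v == m) || (v == m.+1) then [:: v == m] else [::]) ++ sigb m s.
Proof. by rewrite /sigb /=; case: ifP. Qed.

Lemma gcolA_after k m x0 c : path ltn x0 c -> x0 <= k -> 1 <= m <= k ->
  gcolA k m.+1 m.+1 c = gcolA k m m.+1 c /\ good (true :: sigb m (gcolA k m.+1 m.+1 c)).
Proof.
case: c => [|y c] //= /andP[Hy Hc] Hx0 Hm.
have [A B] := gcolA_hi c (m:=m) (k:=k) (p:=m.+2) (ltac:(lia)) (leqnn _).
rewrite sigb_cons (sigb_big A) cats0 B.
have Mx1 : maxn m.+1 m.+1 = m.+1 by rewrite maxnn.
have Mx2 : maxn m.+1 m = m.+1 by apply/maxn_idPl.
have E : gv k m.+1 m.+1 y = gv k m m.+1 y by rewrite /gv Mx1 Mx2.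
rewrite E; split => //.
rewrite /gv Mx2; case: (leqP y k) => H1 /=.
  by rewrite eq_sym (ltn_eqF (ltnSn m)) eqxx.
case: (eqVneq y k.+1) => H2 /=.
  by rewrite eq_sym (ltn_eqF (ltnSn m)) eqxx.
have -> : (y == m) || (y == m.+1) = false.
  apply/negbTE; rewrite negb_or; apply/andP; split; apply/eqP; lia.
by [].
Qed.

Lemma gcolA_plus k m p x0 c : path ltn x0 c -> p <= x0.+1 -> 1 <= m <= k -> p <= m ->
  m - p < size c -> nth 0 c (m - p) <= k ->
  [/\ gcolA k m.+1 p c = gcolA k m p c, count_mem k.+1 (take (m.+1 - p) c) = 0 &
      good (sigb m (gcolA k m.+1 p c))].
Proof.
move=> + + Hm.
elim: c p x0 => [|x c IH] p x0 //= /andP[Hx Hc] Hp Hpm Hs Hn.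
case: (ltngtP p m) => [Hlt|Hgt|Heq]; [ | by lia | ].
{
  have E1 : m - p = (m - p.+1).+1 by lia.
  rewrite E1 /= in Hs Hn.
  have Hxl : x < nth 0 c (m - p.+1).
    have := order_path_min ltn_trans Hc => /allP; apply; exact: mem_nth.
  have Hp1 : p.+1 <= x.+1 by lia.
  have [A B C] := IH p.+1 x Hc Hp1 Hlt Hs Hn.
  have Hxk : x <= k by lia.
  have Hg : forall M, gv k M p x = p by move=> M; rewrite /gv Hxk.
  have E2 : m.+1 - p = (m.+1 - p.+1).+1 by lia.
  rewrite !Hg A sigb_cons E2 /=.
  have -> : (x == k.+1) = false by apply/negbTE/eqP; lia.
  have -> : (p == m) || (p == m.+1) = false.
    by apply/negbTE; rewrite negb_or; apply/andP; split; apply/eqP; lia.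
  by rewrite B /= -A.
}
subst p; rewrite subnn /= in Hn.
have [A B] := gcolA_after Hc Hn Hm.
have Hg : forall M, gv k M m x = m by move=> M; rewrite /gv Hn.
rewrite !Hg A sigb_cons eqxx subSnn /=.
have -> : (x == k.+1) = false by apply/negbTE/eqP; lia.
by rewrite take0 -A; split => //; exact: B.
Qed.


Lemma path_nseq (x n : nat) : path geq x (nseq n x).
Proof. by elim: n => //= n IH; rewrite leqnn. Qed.

Lemma last_nseq' (x n : nat) : last x (nseq n x) = x.
Proof. by elim: n. Qed.

Lemma path_flat (f : nat -> nat) x0 l : path geq x0 l ->
  path geq x0 (flatten [seq nseq (f h).+1 h | h <- l]).
Proof.
elim: l x0 => //= h l IH x0 /andP[H1 H2].
by rewrite H1 cat_path path_nseq last_nseq' IH.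
Qed.

Lemma shape_sorted r lam : sorted geq (shape_lr r lam).
Proof.
rewrite /shape_lr.
have S : sorted geq (rev (iota 1 r)) by rewrite rev_sorted; exact: iota_sorted.
case E: (rev (iota 1 r)) S => [|h l] //= S.
have := @path_flat lam h (h :: l); rewrite /= leqnn S => /(_ isT).
by [].
Qed.

Definition gcol k M c := gcolA k M 1 c.
Definition St k M (T : tableau) : tableau := map (gcol k M) T.

Lemma read_cat (A B : tableau) : read_word (A ++ B) = read_word B ++ read_word A.
Proof. by rewrite /read_word rev_cat flatten_cat. Qed.

Lemma shape_St k M T : shape (St k M T) = shape T.
Proof. by rewrite /shape /St -map_comp; apply/eq_map => c /=; rewrite /gcol size_gcolA. Qed.

Lemma good_flatten (ss : seq (seq bool)) : all good ss -> good (flatten ss).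
Proof. by elim: ss => //= s ss IH /andP[H1 H2]; apply: good_cat => //; apply: IH. Qed.

Lemma sigb_flatten i (ss : seq (seq nat)) : sigb i (flatten ss) = flatten (map (sigb i) ss).
Proof. by elim: ss => //= s ss IH; rewrite sigb_cat IH. Qed.

Lemma bold_aE T m k : bold_a T m k = sumn (map (fun c => count_mem k.+1 (take m c)) T).
Proof. by rewrite /bold_a sumnE big_map. Qed.

Lemma sumn0 (s : seq nat) : (forall x, x \in s -> x = 0) -> sumn s = 0.
Proof. by elim: s => //= x s IH H; rewrite (H x (mem_head _ _)) IH // => y Hy; apply: H; rewrite in_cons Hy orbT. Qed.

Section Tab.
Variables (r : nat) (lam : nat -> nat) (T : tableau).
Hypothesis HT : in_B_lam_rho r lam T.

Lemma col_path c : c \in T -> path ltn 0 c.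
Proof.
case: HT => _ H2 H3 _ Hc.
have := H3 c Hc; have := H2 c Hc.
case: c Hc => [|x c] //= _ Hx ->; rewrite andbT.
by have /andP[] := Hx x (mem_head _ _).
Qed.

Lemma shape_mono p q : p <= q < size T -> size (nth [::] T q) <= size (nth [::] T p).
Proof.
case: HT => H1 _ _ _ /andP[Hpq Hq].
have S := shape_sorted r lam; rewrite -H1 in S.
have := @sorted_leq_nth _ geq (fun y x z H H' => leq_trans H' H) (@leqnn) 0 _ S.
move=> /(_ p q); rewrite !inE !size_map => /(_ (leq_ltn_trans Hpq Hq) Hq Hpq).
by rewrite !(nth_map [::]) //; apply: leq_ltn_trans Hpq Hq.
Qed.

Definition plus (m k : nat) (c : seq nat) := (m <= size c) && (nth 0 c m.-1 <= k).

Lemma plus_down m k p q : 1 <= m -> p <= q < size T -> plus m k (nth [::] T q) -> plus m k (nth [::] T p).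
Proof.
move=> Hm Hpq /andP[Hs Hn]; have := shape_mono Hpq.
case: HT => _ _ _ H4 Hsz.
apply/andP; split; first by apply: leq_trans Hsz.
case/andP: Hpq => Hpq Hq; case: (ltngtP p q) Hpq => // [Hlt|->] _ //.
apply: leq_trans Hn; apply: H4; first by rewrite Hlt.
by apply: leq_trans Hs; lia.
Qed.

Section Split.
Variables (m k : nat).
Hypothesis Hm : 1 <= m <= k.
Let L := find (fun c => ~~ plus m k c) T.

Lemma take_plus c : c \in take L T -> plus m k c.
Proof.
case/(nthP [::]) => i; rewrite size_take.
have HL : L <= size T by apply: find_size.
move=> Hi <-.
have HiL : i < L by move: Hi; case: ifP => // /negbT; rewrite -leqNgt => H1 H2; lia.
rewrite nth_take //; apply/negbFE; exact: (before_find [::] HiL).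
Qed.

Lemma drop_nplus c : c \in drop L T -> ~~ plus m k c.
Proof.
case/(nthP [::]) => i; rewrite size_drop nth_drop => Hi <-.
apply/negP => P.
have HL : L < size T by rewrite -subn_gt0 (leq_ltn_trans (leq0n i) Hi).
have := @nth_find _ [::] (fun c => ~~ plus m k c) T; rewrite has_find => /(_ HL).
rewrite (@plus_down m k L (L + i)) //; first by case/andP: Hm.
by rewrite leq_addr /= -ltn_subRL.
Qed.

Lemma plus_facts c : c \in T -> plus m k c ->
  [/\ gcol k m.+1 c = gcol k m c, count_mem k.+1 (take m c) = 0 & good (sigb m (gcol k m.+1 c))].
Proof.
move=> Hc /andP[H1 H2].
have Hm1 : 1 <= m by case/andP: Hm.
have := @gcolA_plus k m 1 0 c (col_path Hc) (leqnn _) Hm Hm1.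
rewrite subn1 (_ : m.+1 - 1 = m); last by rewrite subn1.
by move=> /(_ _ H2) []; first by rewrite prednK.
Qed.

Lemma np_facts c : c \in T -> ~~ plus m k c ->
  [/\ m \notin gcol k m.+1 c, map (rep m) (gcol k m.+1 c) = gcol k m c &
      count_mem m.+1 (gcol k m.+1 c) = count_mem k.+1 (take m c)].
Proof.
move=> Hc NP.
have Hm1 : 1 <= m by case/andP: Hm.
have := @gcolA_np k m 1 0 c (col_path Hc) (leqnn _) Hm.
rewrite (_ : m.+1 - 1 = m); last by rewrite subn1.
apply; last by move=> [E]; move: Hm1; rewrite -E.
move=> t Ht Et; move: NP; rewrite /plus -Et /= negb_and -ltnNge ltnS leqNgt Ht /=.
by rewrite -ltnNge.
Qed.

Lemma tab_step :
  eps_max m (St k m.+1 T) = bold_a T m k /\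
  odflt (St k m.+1 T) (e_iter m (eps_max m (St k m.+1 T)) (St k m.+1 T)) = St k m T.
Proof.
set u := read_word (St k m.+1 (drop L T)).
set v := read_word (St k m.+1 (take L T)).
have RW : read_word (St k m.+1 T) = u ++ v by rewrite -{1}(cat_take_drop L T) /St map_cat read_cat.
have Hu : m \notin u.
  apply/flattenP => [[s]]; rewrite mem_rev => /mapP [c Hc ->].
  have [A _ _] := np_facts (mem_drop Hc) (drop_nplus Hc).
  by rewrite (negbTE A).
have Hv : good (sigb m v).
  rewrite /v /read_word sigb_flatten; apply: good_flatten.
  apply/allP => s /mapP [s' ]; rewrite mem_rev => /mapP [c Hc ->] ->.
  by have [_ _ G] := plus_facts (mem_take Hc) (take_plus Hc).
have Ht : St k m.+1 (take L T) = St k m (take L T).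
  apply/eq_in_map => c Hc.
  by have [G _ _] := plus_facts (mem_take Hc) (take_plus Hc).
have R2 : read_word (St k m T) = map (rep m) u ++ v.
  rewrite -{1}(cat_take_drop L T) /St map_cat read_cat; congr (_ ++ _); last by rewrite /v -/(St _ _ _) Ht.
  rewrite /u /read_word map_flatten map_rev -map_comp.
  congr (flatten (rev _)); apply/eq_in_map => c Hc /=.
  by have [_ B _] := np_facts (mem_drop Hc) (drop_nplus Hc).
have S2 : shape (St k m T) = shape (St k m.+1 T) by rewrite !shape_St.
have [E1 E2] := eps_step RW Hu Hv R2 S2.
split => //; rewrite E1.
rewrite bold_aE -{1}(cat_take_drop L T) map_cat sumn_cat.
have -> : sumn [seq count_mem k.+1 (take m c) | c <- take L T] = 0.
  apply: sumn0 => x /mapP [c Hc ->].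
  by have [_ B _] := plus_facts (mem_take Hc) (take_plus Hc); rewrite B.
rewrite add0n /u /read_word count_flatten map_rev sumn_rev -map_comp.
congr sumn; apply/eq_in_map => c Hc /=.
by have [_ _ C] := np_facts (mem_drop Hc) (drop_nplus Hc).
Qed.
End Split.

End Tab.


Section Main.
Variables (r : nat) (lam : nat -> nat) (T : tableau).
Hypothesis HT : in_B_lam_rho r lam T.

Lemma St_trans k : St k 1 T = St k.+1 k.+2 T.
Proof. by apply/eq_in_map => c Hc; rewrite /gcol (gcolA_trans k (col_path HT Hc)). Qed.

Lemma St_init : St 1 2 T = T.
Proof.
rewrite /St -[RHS]map_id; apply/eq_in_map => c Hc.
by rewrite /gcol (gcolA_init (col_path HT Hc)).
Qed.

Lemma rev_iotaS m : rev (iota 1 m.+1) = m.+1 :: rev (iota 1 m).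
Proof. by rewrite -[m.+1]addn1 iotaD rev_cat /= addnC. Qed.

Lemma block m k rest : m <= k ->
  bzl_aux (rev (iota 1 m) ++ rest) (St k m.+1 T) =
  [seq bold_a T j k | j <- rev (iota 1 m)] ++ bzl_aux rest (St k 1 T).
Proof.
elim: m => [|m IH] Hmk //.
rewrite rev_iotaS /=.
have Hm : 1 <= m.+1 <= k by rewrite Hmk.
have [E1 E2] := tab_step HT Hm.
by rewrite E2 E1 IH // ltnW.
Qed.

Lemma blocks s n : 1 <= s ->
  bzl_aux (flatten [seq rev (iota 1 k) | k <- iota s n]) (St s s.+1 T) =
  flatten [seq [seq bold_a T j k | j <- rev (iota 1 k)] | k <- iota s n].
Proof.
elim: n s => [|n IH] s Hs //=.
rewrite block // St_trans IH //.
Qed.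

Lemma bzlE : bzl r T = flatten [seq [seq bold_a T j k | j <- rev (iota 1 k)] | k <- iota 1 r].
Proof. by rewrite /bzl /long_word -{1}St_init blocks. Qed.

End Main.

Lemma sumn_iota n : 2 * sumn (iota 1 n) = n * n.+1.
Proof.
elim: n => // n IH.
rewrite -[n.+1]addn1 iotaD sumn_cat /= mulnDr IH add1n; lia.
Qed.

Lemma size_blocks (f : nat -> nat -> nat) n :
  size (flatten [seq [seq f j k | j <- rev (iota 1 k)] | k <- iota 1 n]) = sumn (iota 1 n).
Proof.
rewrite size_flatten /shape -map_comp; congr sumn.
rewrite -[RHS]map_id; apply/eq_map => k /=; by rewrite size_map size_rev size_iota.
Qed.

Lemma bzl_entryE r lam T i j : in_B_lam_rho r lam T -> 1 <= j <= i -> i <= r ->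
  bzl_entry r T i j = bold_a T (i - j + 1) i.
Proof.
move=> HT Hji Hir; rewrite /bzl_entry Hji (bzlE HT).
case/andP: Hji => Hj Hi.
have Er : iota 1 r = iota 1 i.-1 ++ i :: iota i.+1 (r - i).
  have E0 : i.-1 + (r - i).+1 = r by rewrite -subn1; lia.
  rewrite -{1}E0 iotaD /= (_ : 1 + i.-1 = i) //; rewrite -subn1; lia.
rewrite Er map_cat flatten_cat /= nth_cat size_blocks.
have E2 : (i * i.-1) %/ 2 = sumn (iota 1 i.-1).
  have := sumn_iota i.-1; rewrite prednK ?(leq_trans Hj Hi) // => E.
  by rewrite [i * _]mulnC -E mulKn.
rewrite E2 (_ : (sumn (iota 1 i.-1) + j).-1 < sumn (iota 1 i.-1) = false); last by lia.
rewrite (_ : (sumn (iota 1 i.-1) + j).-1 - sumn (iota 1 i.-1) = j.-1); last by lia.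
rewrite nth_cat size_map size_rev size_iota (_ : j.-1 < i); last by lia.
rewrite (nth_map 0); last by rewrite size_rev size_iota; lia.
rewrite nth_rev ?size_iota; last by lia.
rewrite nth_iota; last by lia.
congr bold_a; lia.
Qed.

Lemma bold_a0 T k : bold_a T 0 k = 0.
Proof. by rewrite bold_aE; apply: sumn0 => x /mapP [c _ ->]; rewrite take0. Qed.

Theorem mainTheorem2 (r : nat) (lam : nat -> nat) (T : tableau) :
  1 <= r -> in_B_lam_rho r lam T ->
  forall i j, 1 <= j -> j <= i -> i <= r ->
    circled_CI r T i j = circled_CII T (i - j + 1) i.
Proof.
move=> Hr HT i j Hj Hji Hir.
rewrite /circled_CI /circled_CII (bzl_entryE HT) ?Hj ?Hji //.
case: (ltngtP j i) Hji => // [Hlt|Heq] _.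
  have H1 : 1 <= j.+1 <= i by rewrite Hlt.
  rewrite (bzl_entryE HT H1 Hir).
  by rewrite (_ : (i - j + 1).-1 = i - j.+1 + 1) //; lia.
subst j.
rewrite /bzl_entry (_ : 1 <= i.+1 <= i = false); last by lia.
by rewrite subnn add0n /= bold_a0.
Qed.
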